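(* Let $f(x_1,x_2,x_3,x_4)=\det P(x_1,x_2,x_3,x_4)$ where $$P(x_1,x_2,x_3,x_4)=\begin{bmatrix}x_1 & x_2 & x_3 & x_4\\ -nx_2 & x_1+mx_2 & -nx_4 & x_3+mx_4\\ -qx_3 & -qx_4 & x_1+px_3 & x_2+px_4\\ qnx_4 & -q(x_3+mx_4) & -nx_2-pnx_4 & x_1+mx_2+p(x_3+mx_4)\end{bmatrix}$$ with $(m,n,p,q)=(5,-23,2,-7)$. Then the quartic diophantine equation $f(x_1,x_2,x_3,x_4)=1$ has infinitely many solutions in positive integers (one of them being $(6,2,3,1)$). *)

(* Defs.v *)
From mathcomp Require Import all_boot all_order all_algebra.
Set Implicit Arguments. Unset Strict Implicit. Unset Printing Implicit Defensive.
Import GRing.Theory Num.Theory.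
Local Open Scope ring_scope.

Definition Pmat (m n p q x1 x2 x3 x4 : int) : 'M[int]_4 :=
  \matrix_(i < 4, j < 4)
    nth 0 (nth [::] [::
      [:: x1; x2; x3; x4];
      [:: - n * x2; x1 + m * x2; - n * x4; x3 + m * x4];
      [:: - q * x3; - q * x4; x1 + p * x3; x2 + p * x4];
      [:: q * n * x4; - q * (x3 + m * x4); - n * x2 - p * n * x4;
          x1 + m * x2 + p * (x3 + m * x4)]] i) j.

Definition fpoly (m n p q x1 x2 x3 x4 : int) : int :=
  \det (Pmat m n p q x1 x2 x3 x4).

Definition is_sol (x : int * int * int * int) : Prop :=
  let '(x1, x2, x3, x4) := x in
  0 < x1 /\ 0 < x2 /\ 0 < x3 /\ 0 < x4 /\
  fpoly 5 (-23) 2 (-7) x1 x2 x3 x4 = 1.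

(* Main.v *)
Require Import Defs.
From mathcomp Require Import all_boot all_order all_algebra.
Import GRing.Theory.
Local Open Scope ring_scope.

Lemma exp0 n (A : 'M[int]_n.+1) :
  \det A = \sum_(j < n.+1) A ord0 j * ((-1) ^+ j * \det (row' ord0 (col' j A))).
Proof.
rewrite (expand_det_row _ ord0); apply: eq_bigr => j _.
by rewrite /cofactor add0n.
Qed.

Lemma u1 : fpoly 5 (-23) 2 (-7) 6 2 3 1 = 1.
Proof.
rewrite /fpoly exp0 !big_ord_recl big_ord0 !exp0 !big_ord_recl !big_ord0 !exp0 !big_ord_recl !big_ord0 !det_mx11 !mxE /=.
by vm_compute.
Qed.

From mathcomp Require Import ring zify.
Import Order.TTheory GRing.Theory Num.Theory.

Lemma Pstep x1 x2 x3 x4 :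
  Pmat 5 (-23) 2 (-7) (6*x1+46*x2+21*x3+161*x4) (2*x1+16*x2+7*x3+56*x4)
   (3*x1+23*x2+12*x3+92*x4) (x1+8*x2+4*x3+32*x4)
  = Pmat 5 (-23) 2 (-7) x1 x2 x3 x4 *m Pmat 5 (-23) 2 (-7) 6 2 3 1.
Proof.
apply/matrixP => i j; rewrite !mxE !big_ord_recl big_ord0 !mxE.
case: i => [[|[|[|[|?]]]] Hi] //=; case: j => [[|[|[|[|?]]]] Hj] //=; ring.
Qed.

Definition stepT (x : int * int * int * int) : int * int * int * int :=
  let '(x1, x2, x3, x4) := x in
  (6*x1+46*x2+21*x3+161*x4, 2*x1+16*x2+7*x3+56*x4,
   3*x1+23*x2+12*x3+92*x4, x1+8*x2+4*x3+32*x4).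

Fixpoint vseq (k : nat) : int * int * int * int :=
  if k is k'.+1 then stepT (vseq k') else (6, 2, 3, 1).

Lemma vinv k : is_sol (vseq k) /\ (k%:Z < (vseq k).1.1.1).
Proof.
elim: k => [|k [IH1 IH2]].
  by split => //=; do 4! split => //; exact: u1.
rewrite /=; move: IH1 IH2; case: (vseq k) => [[[a b] c] d] /=.
move=> [ha [hb [hc [hd hf]]]] hk.
split; last by lia.
do 4! (split; first by lia).
have u1' := u1; rewrite /fpoly in hf u1' *.
by rewrite Pstep det_mulmx hf u1' mulr1.
Qed.

Lemma in_bound (s : seq (int * int * int * int)) x :
  x \in s -> (`|x.1.1.1| <= \sum_(y <- s) `|y.1.1.1|)%N.
Proof. by move=> xs; rewrite (big_rem x) //= leq_addr. Qed.

Theorem mainTheorem5 :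
  is_sol (6, 2, 3, 1) /\
  (forall s : seq (int * int * int * int),
     exists x, is_sol x /\ x \notin s).
Proof.
split; first exact: (vinv 0).1.
move=> s; set N := (\sum_(y <- s) `|y.1.1.1|)%N.
have [h1 h2] := vinv N.
exists (vseq N); split => //; apply/negP => /in_bound.
rewrite -/N; clearbody N; case: (vseq N) h2 => [[[a b] c] d] /= h2 H.
have a0 : (0 <= a)%R by apply: le_trans (ltW h2).
move: h2; rewrite -(gez0_abs a0) ltz_nat => h2.
by move: H; rewrite leqNgt h2.
Qed.
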